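(* Let $W\subseteq K_n$ be a $k$-wheel with vertex set $V$ and center $v_0$. (i) If $v_0=\min V$, label the spokes so that $W=W(v_0;v_1,\dots,v_k)$ with $v_1=\max\{v_1,\dots,v_k\}$ and $v_2>v_k$. Then $LT(W)=(\mathrm{Rd}(W)\setminus\{v_0v_1\})\cup\{v_kv_1\}$. (ii) If $v_0=\max V$, label the spokes so that $W=W(v_0;v_1,\dots,v_k)$ with $v_1v_2$ the $\succ$-smallest chord of $W$ and $v_1>v_2$. Then $LT(W)=(\mathrm{Ch}(W)\setminus\{v_1v_2\})\cup\{v_0v_2\}$.
   Context: For $k\ge 3$ and distinct vertices $v_0,\dots,v_k\in[1,n]$, the $k$-wheel $W(v_0;v_1,\dots,v_k)$ has center $v_0$, radii $\mathrm{Rd}(W)=\{v_0v_i:1\le i\le k\}$ and chords $\mathrm{Ch}(W)=\{v_iv_{i+1}:1\le i\le k\}$ with $v_{k+1}=v_1$. A coupled tree of $W$ is a spanning tree $T\subseteq E(W)$ of $V(W)$ whose complement $E(W)\setminus T$ is also a spanning tree. Order the edges of $K_n$ totally by $12\succ13\succ\dots\succ1n\succ23\succ\dots\succ n{-}1\,n$ (for $a<b$, $c<d$: $ab\succ cd$ iff $a<c$, or $a=c$ and $b<d$). Extend to edge sets: $E\succ F$ iff $|E|>|F|$, or $|E|=|F|$ and the $\succ$-largest element of $E\triangle F$ lies in $E$. The leading tree $LT(W)$ is the $\succ$-largest coupled tree of $W$. *)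

(* Defs.v *)
From mathcomp Require Import all_boot finmap.
Set Implicit Arguments. Unset Strict Implicit. Unset Printing Implicit Defensive.
Local Open Scope fset_scope.

(* An edge ab of K_n is stored normalised as the pair (min a b, max a b). *)
Definition edge := (nat * nat)%type.
Definition mkedge (a b : nat) : edge := (minn a b, maxn a b).

Definition edge_succ (e f : edge) : bool :=
  (e.1 < f.1) || ((e.1 == f.1) && (e.2 < f.2)).

Definition symdiff (E F : {fset edge}) : {fset edge} := (E `\` F) `|` (F `\` E).
Definition set_succ (E F : {fset edge}) : Prop :=
  (#|` F| < #|` E|)%N \/
  (#|` E| = #|` F| /\
   exists e, [/\ e \in symdiff E F, e \in E &
               forall f, f \in symdiff E F -> f != e -> edge_succ e f]).

(* The k-wheel W(v0; v1,...,vk), with vs = [:: v1; ...; vk]. *)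
Definition wheel_vertices (v0 : nat) (vs : seq nat) : seq nat := v0 :: vs.
Definition radii (v0 : nat) (vs : seq nat) : {fset edge} :=
  [fset mkedge v0 v | v in vs].
Definition chords (vs : seq nat) : {fset edge} :=
  [fset mkedge (nth 0 vs i) (nth 0 vs (i.+1 %% size vs)) | i in iota 0 (size vs)].
Definition wheel_edges (v0 : nat) (vs : seq nat) : {fset edge} :=
  radii v0 vs `|` chords vs.

Definition adj (T : {fset edge}) : rel nat := fun u v => mkedge u v \in T.
Definition connected_on (V : seq nat) (T : {fset edge}) : Prop :=
  forall u v, u \in V -> v \in V ->
    exists p : seq nat, path (adj T) u p /\ last u p = v.
Definition has_cycle (T : {fset edge}) : Prop :=
  exists c : seq nat, [/\ (3 <= size c)%N, uniq c & cycle (adj T) c].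
Definition spanning_tree (V : seq nat) (T : {fset edge}) : Prop :=
  [/\ forall e, e \in T -> e.1 \in V /\ e.2 \in V,
      connected_on V T & ~ has_cycle T].

Definition coupled_tree (v0 : nat) (vs : seq nat) (T : {fset edge}) : Prop :=
  [/\ T `<=` wheel_edges v0 vs,
      spanning_tree (wheel_vertices v0 vs) T &
      spanning_tree (wheel_vertices v0 vs) (wheel_edges v0 vs `\` T)].

Definition leading_tree (v0 : nat) (vs : seq nat) (T : {fset edge}) : Prop :=
  coupled_tree v0 vs T /\
  forall T', coupled_tree v0 vs T' -> T' != T -> set_succ T T'.

Definition is_wheel (n : nat) (v0 : nat) (vs : seq nat) : Prop :=
  [/\ (3 <= size vs)%N, uniq (v0 :: vs) & all (fun v => (1 <= v <= n)%N) (v0 :: vs)].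

(* Main.v *)
Require Import Defs.
From mathcomp Require Import all_boot finmap zify.
Set Implicit Arguments. Unset Strict Implicit. Unset Printing Implicit Defensive.
Local Open Scope fset_scope.

Lemma mkedge_eq a b c d : mkedge a b = mkedge c d -> (a = c /\ b = d) \/ (a = d /\ b = c).
Proof. rewrite /mkedge; case=> H1 H2. lia. Qed.
Lemma mkedgeC a b : mkedge a b = mkedge b a.
Proof. by rewrite /mkedge minnC maxnC. Qed.
Lemma adjC S x y : adj S x y = adj S y x.
Proof. by rewrite /adj mkedgeC. Qed.
Lemma es_trans e f g : edge_succ e f -> edge_succ f g -> edge_succ e g.
Proof. case: e f g => [a b] [c d] [x y]; rewrite /edge_succ /=. lia. Qed.
Lemma es_total e f : e != f -> edge_succ e f || edge_succ f e.
Proof. case: e f => [a b] [c d]; rewrite /edge_succ /= xpair_eqE. lia. Qed.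
Lemma es_irr e f : edge_succ e f -> edge_succ f e -> False.
Proof. case: e f => [a b] [c d]; rewrite /edge_succ /=. lia. Qed.

Lemma two_split (s : seq nat) y1 y2 : y1 \in s -> y2 \in s -> y1 != y2 ->
  exists a y t y', [/\ s = a ++ y :: t, y' \in t & (y = y1 /\ y' = y2) \/ (y = y2 /\ y' = y1)].
Proof.
move=> H1 H2 Hne; case/splitPr: H1 H2 => a t.
rewrite mem_cat inE eq_sym (negbTE Hne) /=.
case/orP=> [Ha|Ht]; last by exists a, y1, t, y2; split; auto.
case/splitPr: Ha => a1 a2. exists a1, y2, (a2 ++ y1 :: t), y1; split; auto.
- by rewrite -catA.
- by rewrite mem_cat inE eqxx orbT.
Qed.

Lemma size2 (t : seq nat) a b : a \in t -> b \in t -> a != b -> 2 <= size t.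
Proof.
case: t => [|z [|w t]] //= ; rewrite !inE => /eqP -> /eqP ->; by rewrite eqxx.
Qed.

Definition noloop (S : {fset edge}) := forall x, ~~ adj S x x.

Lemma two_nbrs S x p y1 y2 : noloop S -> path (adj S) x p -> uniq (x :: p) ->
  y1 \in x :: p -> y2 \in x :: p -> y1 != y2 ->
  adj S (last x p) y1 -> adj S (last x p) y2 -> has_cycle S.
Proof.
move=> Hnl Hp Hu H1 H2 Hne A1 A2.
have [a [y [t [y' [Hs Hy' Hyy]]]]] := two_split H1 H2 Hne.
have Hsort : sorted (adj S) (a ++ y :: t) by rewrite -Hs.
have [_ Hpt] := cat_sorted2 Hsort.
have Hl : last x p = last y t.
  have -> : last x p = last 0 (x :: p) by [].
  by rewrite Hs last_cat.
have Ay : adj S (last y t) y /\ adj S (last y t) y'.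
  by rewrite -Hl; case: Hyy => [[-> ->]|[-> ->]].
case: Ay => Ay Ay'.
exists (y :: t); split.
- have Hlt : last y t \in t.
    have : last y t \in y :: t by apply: mem_last.
    rewrite inE; case/orP=> // /eqP E. by move: (Hnl y); rewrite -{1}E Ay.
  have Hne' : y' != last y t.
    by apply/eqP=> E; move: (Hnl y'); rewrite {1}E Ay'.
  by rewrite /= ltnS (size2 Hy' Hlt Hne').
- by move: Hu; rewrite Hs cat_uniq => /and3P [_ _ ->].
- by rewrite /= rcons_path; apply/andP; split.
Qed.

Definition wfe (S : {fset edge}) (V : {fset nat}) :=
  forall e, e \in S -> [/\ e.1 < e.2, e.1 \in V & e.2 \in V].

Lemma wfe_noloop S V : wfe S V -> noloop S.
Proof. move=> H x; apply/negP=> /H [] /=; rewrite /mkedge /=; lia. Qed.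

Lemma mk_end x y : y = (mkedge x y).1 \/ y = (mkedge x y).2.
Proof. rewrite /mkedge /=; lia. Qed.
Lemma mk_end1 x y : x = (mkedge x y).1 \/ x = (mkedge x y).2.
Proof. rewrite /mkedge /=; lia. Qed.

Lemma adj_inV S V x y : wfe S V -> adj S x y -> y \in V.
Proof. move=> H /H [] _ H1 H2; by case: (mk_end x y) => E; rewrite E. Qed.
Lemma adj_inV1 S V x y : wfe S V -> adj S x y -> x \in V.
Proof. move=> H /H [] _ H1 H2; by case: (mk_end1 x y) => E; rewrite E. Qed.

Lemma stop_case S x p : noloop S -> ~ has_cycle S -> path (adj S) x p -> uniq (x :: p) ->
  p != [::] -> (forall y, adj S (last x p) y -> y \in x :: p) ->
  exists l w, adj S l w /\ forall y, adj S l y -> y = w.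
Proof.
move=> Hnl Hc Hp Hu; case/lastP: p Hp Hu => [//|p' l] Hp Hu _ Hall.
move: Hp; rewrite rcons_path => /andP [Hp' Hw].
exists l, (last x p'); split; first by rewrite adjC.
move=> y Hy; apply/eqP; apply/negPn/negP => Hne; apply: Hc.
apply: (two_nbrs (y1:=y) (y2:=last x p') Hnl _ Hu) => //.
- by rewrite rcons_path Hp' Hw.
- by apply: Hall; rewrite ?last_rcons.
- rewrite -cats1 -cat_cons mem_cat; apply/orP; left; apply: mem_last.
- by rewrite last_rcons.
- by rewrite last_rcons adjC.
Qed.

Lemma leaf_ex S V : wfe S V -> ~ has_cycle S -> forall d x p,
  #|`V| - size p <= d -> path (adj S) x p -> uniq (x :: p) -> all (mem V) (x :: p) ->
  p != [::] -> exists l w, adj S l w /\ forall y, adj S l y -> y = w.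
Proof.
move=> Hw Hc; have Hnl := wfe_noloop Hw.
elim=> [|d IH] x p Hd Hp Hu Ha Hne.
all: case: (boolP (has (fun y => adj S (last x p) y && (y \notin x :: p)) V)).
2,4: move=> Hn; apply: (stop_case Hnl Hc Hp Hu Hne) => y Hy;
     apply/negPn/negP => Hy'; move/hasPn: Hn => /(_ y) /=;
     move=> /(_ (adj_inV Hw Hy)); by rewrite Hy Hy'.
all: move=> /hasP [y HyV /andP [Hy Hyn]].
all: have Hs : size (y :: x :: p) <= #|`V| by
   apply: uniq_leq_size => [|z]; [rewrite cons_uniq Hyn Hu|rewrite inE => /orP [/eqP ->//|/(allP Ha)]].
- move: Hs Hd => /=; lia.
- apply: (IH x (rcons p y)).
  + move: Hs Hd; rewrite size_rcons /=; lia.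
  + by rewrite rcons_path Hp Hy.
  + by rewrite -rcons_cons rcons_uniq Hyn Hu.
  + rewrite -rcons_cons all_rcons Ha andbT; exact: HyV.
  + by case: p {Hd Hp Hu Ha Hne Hy Hyn Hs}.
Qed.

Lemma mk_norm e : e.1 < e.2 -> mkedge e.1 e.2 = e.
Proof. case: e => a b /= H; rewrite /mkedge (minn_idPl (ltnW H)) (maxn_idPr (ltnW H)) //. Qed.

Lemma forest_card N S V : #|`S| = N -> wfe S V -> ~ has_cycle S -> #|`S| <= (#|`V|).-1.
Proof.
elim: N S V => [|N IH] S V HN Hw Hc; first by rewrite HN.
have [e He] : exists e, e \in S by apply/fset0Pn; rewrite -cardfs_gt0 HN.
have [Hlt He1 He2] := Hw e He.
have [l [w [Hlw Hleaf]]] : exists l w, adj S l w /\ forall y, adj S l y -> y = w.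
  apply: (leaf_ex Hw Hc (d := #|`V|) (x := e.1) (p := [:: e.2])) => //.
  - lia.
  - by rewrite /= andbT /adj mk_norm.
  - by rewrite /= inE; apply/andP; split; [apply/eqP=> E; move: Hlt; rewrite E ltnn|].
  - by rewrite /= He1 He2.
set e0 := mkedge l w.
have He0 : e0 \in S by [].
have [Hlt0 _ _] := Hw e0 He0.
have Hlw' : l != w by apply/eqP=> E; move: Hlt0; rewrite /e0 /mkedge E minnn maxnn ltnn.
have HlV : l \in V := adj_inV1 Hw Hlw.
have HwV : w \in V := adj_inV Hw Hlw.
have Hw' : wfe (S `\ e0) (V `\ l).
  move=> f; rewrite in_fsetD1 => /andP [Hf0 Hf].
  have [Hf1 Hf2 Hf3] := Hw f Hf; split => //; rewrite in_fsetD1 ?Hf2 ?Hf3 andbT;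
  apply/eqP => E; move/negP: Hf0; apply; apply/eqP.
  - have : adj S l f.2 by rewrite /adj -E mk_norm.
    move/Hleaf => E2; by rewrite /e0 -E -E2 mk_norm.
  - have : adj S l f.1 by rewrite /adj -E mkedgeC mk_norm.
    move/Hleaf => E2; by rewrite /e0 -E -E2 mkedgeC mk_norm.
have Hc' : ~ has_cycle (S `\ e0).
  move=> [c [H1 H2 H3]]; apply: Hc; exists c; split => //.
  apply: (sub_cycle _ H3) => x y; rewrite /adj in_fsetD1 => /andP [].
  by [].
have := IH (S `\ e0) (V `\ l) _ Hw' Hc'.
have := cardfsD1 e0 S; have := cardfsD1 l V; have := cardfsD1 w (V `\ l).
rewrite He0 HlV in_fsetD1 HwV eq_sym Hlw' /= => A B C D.
rewrite /nat_of_bool in A B C.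
have E := C; rewrite HN add1n in E; case: E => E.
move: (D (esym E)); lia.
Qed.

Definition reach S u v := exists p, path (adj S) u p /\ last u p = v.

Lemma reach_trans S u v w : reach S u v -> reach S v w -> reach S u w.
Proof.
move=> [p [Hp Hl]] [q [Hq Hl']]; exists (p ++ q); rewrite cat_path last_cat Hl Hp Hq; by [].
Qed.

Lemma argmax_seq (f : nat -> nat) (s : seq nat) : s != [::] ->
  exists2 x, x \in s & forall y, y \in s -> f y <= f x.
Proof.
elim: s => [//|a s IH] _; case: (eqVneq s [::]) => [->|Hs].
  by exists a; rewrite ?inE // => y; rewrite inE => /eqP ->.
have [b Hb Hm] := IH Hs; case: (leqP (f a) (f b)) => H.
- exists b; first by rewrite inE Hb orbT.
  by move=> y; rewrite inE => /orP [/eqP ->|/Hm].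
- exists a; first by rewrite inE eqxx.
  move=> y; rewrite inE => /orP [/eqP ->//|/Hm]; lia.
Qed.

Lemma tree_crit (V : seq nat) S r (f P : nat -> nat) :
  (forall e, e \in S -> e.1 \in V /\ e.2 \in V) -> r \in V ->
  (forall x, x \in V -> x != r -> [/\ P x \in V, adj S x (P x) & f (P x) < f x]) ->
  (forall x y, adj S x y -> f x != f y) ->
  (forall x y, adj S x y -> f y < f x -> y = P x) ->
  spanning_tree V S.
Proof.
move=> H1 Hr H2 H3 H4; split => //.
- have Hreach : forall m x, x \in V -> f x <= m -> reach S x r /\ reach S r x.
    elim=> [|m IH] x Hx Hm; case: (eqVneq x r) => [->|Hne];
      try by split; exists [::].
    + have [_ _] := H2 x Hx Hne; lia.
    have [HP HA Hf] := H2 x Hx Hne.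
    have [[p [Hp Hl]] [q [Hq Hl']]] := IH (P x) HP ltac:(lia).
    split.
    * exists (P x :: p); by rewrite /= HA Hp.
    * exists (rcons q x); rewrite rcons_path last_rcons Hq Hl' adjC HA; by [].
  move=> u v Hu Hv.
  have [A _] := Hreach (f u) u Hu (leqnn _).
  have [_ B] := Hreach (f v) v Hv (leqnn _).
  exact: reach_trans A B.
- move=> [c [Hs Hu Hc]].
  have [x Hx Hmax] := argmax_seq f (s := c) ltac:(by move: Hs; case: (c)).
  case: (rot_to Hx) => i p Hrot.
  have Hs' : 3 <= size (x :: p) by rewrite -Hrot size_rot.
  have Hu' : uniq (x :: p) by rewrite -Hrot rot_uniq.
  have Hc' : cycle (adj S) (x :: p) by rewrite -Hrot rot_cycle.
  have Hm : forall y, y \in x :: p -> f y <= f x by move=> y; rewrite -Hrot mem_rot; apply: Hmax.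
  clear Hrot; case: p Hs' Hu' Hc' Hm => [//|y p] Hs' Hu' Hc' Hm.
  case/lastP: p Hs' Hu' Hc' Hm => [//|q z] Hs' Hu' Hc' Hm.
  move: Hc'; rewrite /= rcons_path last_rcons => /andP [Axy /andP [_ Azx]].
  have Axz : adj S x z by rewrite adjC.
  have Hyz : y != z.
    move: Hu'; rewrite /= mem_rcons inE => /and3P [_ /norP [H _] _]; by [].
  have Ly : f y < f x.
    have := Hm y; rewrite !inE eqxx orbT => /(_ isT); have := H3 _ _ Axy; lia.
  have Lz : f z < f x.
    have := Hm z; rewrite !inE mem_rcons inE eqxx !orbT => /(_ isT); have := H3 _ _ Axz; lia.
  move/negP: Hyz; apply; by rewrite (H4 _ _ Axy Ly) (H4 _ _ Axz Lz).
Qed.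

Lemma seq_max (s : seq edge) : s != [::] ->
  exists m, m \in s /\ forall f, f \in s -> f != m -> edge_succ m f.
Proof.
elim: s => [//|a s IH] _; case: (eqVneq s [::]) => [->|Hs].
  by exists a; split; rewrite ?inE // => f; rewrite inE => ->.
have [b [Hb Hm]] := IH Hs; case: (eqVneq a b) => [->|Hab].
  by exists b; split; rewrite ?inE ?Hb ?orbT // => f; rewrite inE => /orP [/eqP ->|/Hm]; rewrite ?eqxx.
case/orP: (es_total Hab) => H.
- exists a; split; first by rewrite inE eqxx.
  move=> f; rewrite inE => /orP [/eqP ->|Hf]; first by rewrite eqxx.
  case: (eqVneq f b) => [->//|Hfb] _; exact: es_trans H (Hm f Hf Hfb).
- exists b; split; first by rewrite inE Hb orbT.
  move=> f; rewrite inE => /orP [/eqP ->//|/Hm //].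
Qed.

Lemma set_succ_crit (T T' : {fset edge}) : #|`T'| <= #|`T| -> T' != T ->
  (forall m, m \in T' -> m \notin T -> (forall h, edge_succ h m -> (h \in T) = (h \in T')) -> False) ->
  set_succ T T'.
Proof.
move=> Hc Hne Hm; case: (ltnP #|`T'| #|`T|) => Hlt; [by left|right].
split; first by apply/eqP; rewrite eqn_leq Hc Hlt.
have HS : (symdiff T T' : seq edge) != [::].
  apply/eqP => E; move/eqP: Hne; apply; apply/fsetP => x.
  have : x \notin symdiff T T' by rewrite -[x \in _]/(x \in (symdiff T T' : seq edge)) E.
  rewrite /symdiff in_fsetU !in_fsetD; case: (x \in T); case: (x \in T') => //.
have [m [HmS Hmax]] := seq_max HS.
have Hmax' : forall f, f \in symdiff T T' -> f != m -> edge_succ m f by [].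
exists m; split => //.
move: HmS; rewrite /symdiff in_fsetU !in_fsetD; case: (boolP (m \in T)) => HT //=.
rewrite andbF /= => HT';  exfalso; apply: (Hm m HT' HT) => h Hh.
case: (boolP (h \in T)); case: (boolP (h \in T')) => // H1 H2; exfalso.
all: have Hhm : h != m by apply/eqP=> E; move: Hh; rewrite E; case: (m) => a b; rewrite /edge_succ /=; lia.
all: have : h \in symdiff T T' by rewrite /symdiff in_fsetU !in_fsetD ?H1 ?H2.
all: move/Hmax'/(_ Hhm) => H; exact: es_irr H Hh.
Qed.

Definition wh (v0 : nat) (vs : seq nat) := [/\ 3 <= size vs, v0 \notin vs & uniq vs].
Definition cid (vs : seq nat) i := mkedge (nth 0 vs i) (nth 0 vs (i.+1 %% size vs)).

Lemma wne v0 vs i j : wh v0 vs -> i < size vs -> j < size vs -> nth 0 vs i = nth 0 vs j -> i = j.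
Proof. move=> [_ _ Hu] Hi Hj /eqP; rewrite nth_uniq // => /eqP. by []. Qed.

Lemma win vs i : i < size vs -> nth 0 vs i \in vs.
Proof. exact: mem_nth. Qed.

Lemma v0ne v0 vs z : wh v0 vs -> z \in vs -> z <> v0.
Proof. move=> [_ H _] Hz E; move: H; by rewrite -E Hz. Qed.

Lemma memR v0 vs e : e \in radii v0 vs -> exists2 z, z \in vs & e = mkedge v0 z.
Proof. case/imfsetP => z /= Hz ->; by exists z. Qed.
Lemma inR v0 vs z : z \in vs -> mkedge v0 z \in radii v0 vs.
Proof. move=> H; apply/imfsetP; by exists z. Qed.

Lemma memC vs e : e \in chords vs -> exists2 i, i < size vs & e = cid vs i.
Proof. case/imfsetP => i /=; rewrite mem_iota add0n => /andP [_ H] ->; by exists i. Qed.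
Lemma inC vs i : i < size vs -> cid vs i \in chords vs.
Proof. move=> H; apply/imfsetP; exists i => //=; by rewrite mem_iota. Qed.

Lemma modS i k : 2 <= k -> i < k -> (i.+1 %% k = if i.+1 == k then 0 else i.+1).
Proof.
move=> Hk Hi; case: eqP => [->|H]; first by rewrite modnn.
rewrite modn_small //; lia.
Qed.

Lemma cid_ends v0 vs i : wh v0 vs -> i < size vs ->
  [/\ nth 0 vs i \in vs, nth 0 vs (i.+1 %% size vs) \in vs &
      nth 0 vs i <> nth 0 vs (i.+1 %% size vs)].
Proof.
move=> Hw Hi; have [Hk _ _] := Hw.
have Hi' : i.+1 %% size vs < size vs by rewrite ltn_mod; lia.
split; try exact: win.
move/(wne Hw Hi Hi'); rewrite modS; [case: eqP|lia|lia] => H; lia.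
Qed.

Lemma r_ne_c v0 vs z i : wh v0 vs -> i < size vs -> mkedge v0 z <> cid vs i.
Proof.
move=> Hw Hi; have [H1 H2 _] := cid_ends Hw Hi.
case/mkedge_eq => [[E _]|[E _]]; [apply: (v0ne Hw H1)|apply: (v0ne Hw H2)]; by rewrite E.
Qed.

Lemma r_inj v0 vs z z' : wh v0 vs -> z \in vs -> mkedge v0 z = mkedge v0 z' -> z = z'.
Proof. move=> Hw Hz; case/mkedge_eq => [[_ ->]//|[E1 E2]]; exfalso; apply: (v0ne Hw Hz); by rewrite E2. Qed.

Lemma cid_inj v0 vs i j : wh v0 vs -> i < size vs -> j < size vs -> cid vs i = cid vs j -> i = j.
Proof.
move=> Hw Hi Hj; have [Hk _ _] := Hw.
have Hi' : i.+1 %% size vs < size vs by rewrite ltn_mod; lia.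
have Hj' : j.+1 %% size vs < size vs by rewrite ltn_mod; lia.
case/mkedge_eq => [[/(wne Hw Hi Hj) //]|[/(wne Hw Hi Hj') E1 /(wne Hw Hi' Hj) E2]].
move: E1 E2; rewrite !modS; try lia; do 2 case: eqP; lia.
Qed.

Lemma mk_in (P : pred nat) a b : P a -> P b -> P (mkedge a b).1 /\ P (mkedge a b).2.
Proof.
move=> Ha Hb; rewrite /mkedge /=.
have [E1|E1] : minn a b = a \/ minn a b = b by lia.
all: have [E2|E2] : maxn a b = a \/ maxn a b = b by lia.
all: by rewrite E1 E2.
Qed.

Lemma mk_lt a b : a <> b -> (mkedge a b).1 < (mkedge a b).2.
Proof. rewrite /mkedge /=; lia. Qed.

Lemma W_end v0 vs e : wh v0 vs -> e \in wheel_edges v0 vs ->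
  [/\ e.1 < e.2, e.1 \in v0 :: vs & e.2 \in v0 :: vs].
Proof.
move=> Hw; rewrite /wheel_edges in_fsetU => /orP [/memR [z Hz ->]|/memC [i Hi ->]].
- have Hne := v0ne Hw Hz.
  have [] := @mk_in (mem (v0 :: vs)) v0 z; rewrite ?inE ?eqxx ?Hz ?orbT //.
  move=> A B; split => //; apply: mk_lt => E; by apply: Hne.
- have [H1 H2 H3] := cid_ends Hw Hi.
  have [] := @mk_in (mem (v0 :: vs)) (nth 0 vs i) (nth 0 vs (i.+1 %% size vs)); rewrite ?inE ?H1 ?H2 ?orbT //.
  move=> A B; split => //; exact: mk_lt.
Qed.

Lemma W_v0 v0 vs y : wh v0 vs -> mkedge v0 y \in wheel_edges v0 vs -> y \in vs.
Proof.
move=> Hw; rewrite /wheel_edges in_fsetU => /orP [/memR [z Hz E]|/memC [i Hi E]].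
- by rewrite -(r_inj Hw Hz (esym E)).
- have [H1 H2 H3] := cid_ends Hw Hi.
  move: E; rewrite /cid; case/mkedge_eq => [[E _]|[E _]]; exfalso;
  [apply: (v0ne Hw H1)|apply: (v0ne Hw H2)]; by rewrite E.
Qed.

Lemma W_y v0 vs y y' : wh v0 vs -> y \in vs -> mkedge y y' \in wheel_edges v0 vs ->
  y' = v0 \/ mkedge y y' \in chords vs.
Proof.
move=> Hw Hy; rewrite /wheel_edges in_fsetU => /orP [/memR [z Hz E]|->]; last by right.
left; case/mkedge_eq: E => [[E _]|[_ ->//]]; exfalso; exact: (v0ne Hw Hy).
Qed.

Ltac crush := repeat (case: eqP => /= ?); try lia.

Lemma star_tree v0 vs S a b : wh v0 vs -> a \in vs -> b \in vs -> a <> b ->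
  (forall e, e \in S -> e.1 \in v0 :: vs /\ e.2 \in v0 :: vs) ->
  (forall x y, adj S x y -> [\/ [/\ x = v0, y \in vs & y <> a], [/\ y = v0, x \in vs & x <> a],
                              x = a /\ y = b | x = b /\ y = a]) ->
  (forall z, z \in vs -> z <> a -> adj S z v0) -> adj S a b -> spanning_tree (v0 :: vs) S.
Proof.
move=> Hw Ha Hb Hab H1 Hadj Hr Hab'.
have Ha0 := v0ne Hw Ha; have Hb0 := v0ne Hw Hb.
apply: (tree_crit (r := v0) (f := fun x => if x == v0 then 0 else if x == a then 2 else 1)
                  (P := fun x => if x == a then b else v0)) => //.
- by rewrite inE eqxx.
- move=> x; rewrite inE => /orP [/eqP ->|Hx]; first by rewrite eqxx.
  move=> Hx0; have Hx0' : x <> v0 by move=> E; move: Hx0; rewrite E eqxx.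
  case: eqP => [->|Hxa]; split.
  + by rewrite inE Hb orbT.
  + exact: Hab'.
  + crush.
  + by rewrite inE eqxx.
  + exact: Hr.
  + crush.
- move=> x y /Hadj [[-> /(v0ne Hw) ? ?]|[-> /(v0ne Hw) ? ?]|[-> ->]|[-> ->]]; apply/eqP; crush.
- move=> x y /Hadj [[-> /(v0ne Hw) ? ?]|[-> /(v0ne Hw) ? ?]|[-> ->]|[-> ->]]; crush.
Qed.

Lemma idx v0 vs i : wh v0 vs -> i < size vs -> index (nth 0 vs i) vs = i.
Proof. move=> [_ _ Hu] Hi; exact: index_uniq. Qed.
Lemma wv0 v0 vs i : wh v0 vs -> i < size vs -> (nth 0 vs i == v0) = false.
Proof. move=> Hw Hi; apply/eqP; apply: (v0ne Hw); exact: win. Qed.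
Lemma weq v0 vs i j : wh v0 vs -> i < size vs -> j < size vs -> (nth 0 vs i == nth 0 vs j) = (i == j).
Proof. move=> [_ _ Hu] Hi Hj; exact: nth_uniq. Qed.

Lemma path_treeA v0 vs S : wh v0 vs ->
  (forall e, e \in S -> e.1 \in v0 :: vs /\ e.2 \in v0 :: vs) ->
  (forall x y, adj S x y -> [\/ x = v0 /\ y = nth 0 vs 0, y = v0 /\ x = nth 0 vs 0,
       exists2 i, i.+1 < size vs & x = nth 0 vs i /\ y = nth 0 vs i.+1 |
       exists2 i, i.+1 < size vs & x = nth 0 vs i.+1 /\ y = nth 0 vs i]) ->
  adj S (nth 0 vs 0) v0 -> (forall j, 0 < j < size vs -> adj S (nth 0 vs j) (nth 0 vs j.-1)) ->
  spanning_tree (v0 :: vs) S.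
Proof.
move=> Hw H1 Hadj Hr Hc; have [Hk _ _] := Hw.
apply: (tree_crit (r := v0) (f := fun x => if x == v0 then 0 else (index x vs).+1)
                  (P := fun x => if index x vs == 0 then v0 else nth 0 vs (index x vs).-1)) => //.
- by rewrite inE eqxx.
- move=> x; rewrite inE => /orP [/eqP ->|Hx]; first by rewrite eqxx.
  move=> _; rewrite -(nth_index 0 Hx); move: (Hx); rewrite -index_mem.
  set j := index x vs => Hj; clearbody j; have {}Hj : j < size vs := Hj; rewrite (idx Hw Hj) (wv0 Hw Hj).
  case: eqP => [E|E]; split.
  + by rewrite inE eqxx.
  + by rewrite E.
  + by rewrite eqxx.
  + rewrite inE win ?orbT //. lia.
  + apply: Hc; lia.
  + rewrite (wv0 Hw) ?(idx Hw); lia.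
- move=> x y /Hadj [[-> ->]|[-> ->]|[i Hi [-> ->]]|[i Hi [-> ->]]]; apply/eqP.
  all: rewrite ?eqxx ?(wv0 Hw) ?(idx Hw). all: try lia.
- move=> x y /Hadj [[-> ->]|[-> ->]|[i Hi [-> ->]]|[i Hi [-> ->]]].
  all: rewrite ?eqxx ?(wv0 Hw) ?(idx Hw); try lia.
  all: by [].
Qed.

Lemma path_treeB v0 vs S : wh v0 vs ->
  (forall e, e \in S -> e.1 \in v0 :: vs /\ e.2 \in v0 :: vs) ->
  (forall x y, adj S x y ->
       (x = v0 /\ y = nth 0 vs 1) \/ (y = v0 /\ x = nth 0 vs 1) \/
       (exists i, [/\ 0 < i, i.+1 < size vs, x = nth 0 vs i & y = nth 0 vs i.+1]) \/
       (exists i, [/\ 0 < i, i.+1 < size vs, x = nth 0 vs i.+1 & y = nth 0 vs i]) \/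
       (x = nth 0 vs (size vs).-1 /\ y = nth 0 vs 0) \/ (y = nth 0 vs (size vs).-1 /\ x = nth 0 vs 0)) ->
  adj S (nth 0 vs 1) v0 -> adj S (nth 0 vs 0) (nth 0 vs (size vs).-1) ->
  (forall j, 1 < j < size vs -> adj S (nth 0 vs j) (nth 0 vs j.-1)) ->
  spanning_tree (v0 :: vs) S.
Proof.
move=> Hw H1 Hadj Hr Hr2 Hc; have [Hk _ _] := Hw.
apply: (tree_crit (r := v0)
   (f := fun x => if x == v0 then 0 else if x == nth 0 vs 0 then size vs else index x vs)
   (P := fun x => if x == nth 0 vs 1 then v0 else if x == nth 0 vs 0 then nth 0 vs (size vs).-1
                  else nth 0 vs (index x vs).-1)) => //.
- by rewrite inE eqxx.
- move=> x; rewrite inE => /orP [/eqP ->|Hx]; first by rewrite eqxx.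
  move=> _; rewrite -(nth_index 0 Hx); move: (Hx); rewrite -index_mem.
  set j := index x vs => Hj; clearbody j; have {}Hj : j < size vs := Hj.
  rewrite (idx Hw Hj) (wv0 Hw Hj) !(weq Hw Hj) //; try lia.
  case: eqP => [->|E1]; [|case: eqP => [->|E0]]; split.
  + by rewrite inE eqxx.
  + by [].
  + rewrite ?eqxx ?(wv0 Hw) ?(weq Hw) ?(idx Hw); try lia; crush.
  + rewrite inE win ?orbT //; lia.
  + by [].
  + rewrite ?eqxx ?(wv0 Hw) ?(weq Hw) ?(idx Hw); try lia; crush.
  + rewrite inE win ?orbT //; lia.
  + apply: Hc; lia.
  + rewrite ?eqxx ?(wv0 Hw) ?(weq Hw) ?(idx Hw); try lia; crush.
- move=> x y /Hadj [[-> ->]|[[-> ->]|[[i [? ? -> ->]]|[[i [? ? -> ->]]|[[-> ->]|[-> ->]]]]]]; apply/eqP.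
  all: rewrite ?eqxx ?(wv0 Hw) ?(weq Hw) ?(idx Hw); try lia.
  all: crush.
- move=> x y /Hadj [[-> ->]|[[-> ->]|[[i [? ? -> ->]]|[[i [? ? -> ->]]|[[-> ->]|[-> ->]]]]]].
  all: rewrite ?eqxx ?(wv0 Hw) ?(weq Hw) ?(idx Hw); try lia.
  all: crush.
Qed.

Lemma conn_nbr V S x z : connected_on V S -> x \in V -> z \in V -> x <> z -> exists y, adj S x y.
Proof.
move=> Hc Hx Hz Hne; have [p [Hp Hl]] := Hc x z Hx Hz.
case: p Hp Hl => [/= _ E|y p /= /andP [H _] _]; [by case: Hne|by exists y].
Qed.

Lemma coupled_card v0 vs T : wh v0 vs -> coupled_tree v0 vs T -> #|`T| <= size vs.
Proof.
move=> Hw [Hsub [_ _ Hac] _].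
have := @forest_card #|`T| T [fset x in v0 :: vs] erefl.
have [_ H0 Hu] := Hw.
rewrite card_fseq undup_id /=; last by rewrite /= H0 Hu.
apply => // e He; have := W_end Hw (fsubsetP Hsub e He).
by case=> A B C; split; rewrite ?inE.
Qed.

Lemma ck_eq vs : 0 < size vs -> cid vs (size vs).-1 = mkedge (nth 0 vs (size vs).-1) (nth 0 vs 0).
Proof. move=> H; by rewrite /cid prednK // modnn. Qed.

Lemma c12_eq vs : 2 <= size vs -> cid vs 0 = mkedge (nth 0 vs 0) (nth 0 vs 1).
Proof. move=> H; by rewrite /cid modn_small. Qed.

Lemma cidS vs j : j.+1 < size vs -> cid vs j = mkedge (nth 0 vs j) (nth 0 vs j.+1).
Proof. move=> H; by rewrite /cid modn_small. Qed.

Lemma cardR v0 vs : wh v0 vs -> size vs <= #|`radii v0 vs|.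
Proof.
move=> Hw; have [_ _ Hu] := Hw.
rewrite -(size_map (mkedge v0)); apply: uniq_leq_size.
- rewrite map_inj_in_uniq // => x y Hx _; exact: r_inj Hw Hx.
- move=> e /mapP [z Hz ->]; exact: inR.
Qed.

Lemma cardCh v0 vs : wh v0 vs -> size vs <= #|`chords vs|.
Proof.
move=> Hw.
rewrite -[X in X <= _](size_iota 0) -(size_map (cid vs)); apply: uniq_leq_size.
- rewrite map_inj_in_uniq ?iota_uniq // => x y; rewrite !mem_iota !add0n => /andP [_ Hx] /andP [_ Hy].
  exact: cid_inj Hw Hx Hy.
- move=> e /mapP [i]; rewrite mem_iota add0n => /andP [_ Hi] ->; exact: inC.
Qed.

Lemma mk_ord a b : a < b -> mkedge a b = (a, b).
Proof. move=> H; rewrite /mkedge (minn_idPl (ltnW H)) (maxn_idPr (ltnW H)) //. Qed.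

Ltac prune := repeat match goal with
 | H : ?T |- _ =>
   let t := type of T in
   lazymatch t with Prop =>
     lazymatch T with
     | is_true (_ <= _) => fail
     | @eq ?A _ _ => tryif unify A nat then fail else clear H
     | ~ (@eq ?A _ _) => tryif unify A nat then fail else clear H
     | is_true (_ == _) => fail
     | is_true (_ != _) => fail
     | is_true (_ && _) => fail
     | is_true (_ < _ < _) => fail
     | is_true (_ <= _ < _) => fail
     | _ => clear H
     end
   end
 end.
Ltac slia := prune; (repeat match goal with x := _ |- _ => subst x end); lia.

Lemma part1 v0 vs : wh v0 vs ->
  (forall v, v \in vs -> v0 < v) ->
  (forall v, v \in vs -> v <= nth 0 vs 0) ->
  nth 0 vs (size vs).-1 < nth 0 vs 1 ->
  leading_tree v0 vs
     ((radii v0 vs `\ mkedge v0 (nth 0 vs 0))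
        `|` [fset mkedge (nth 0 vs (size vs).-1) (nth 0 vs 0)]).
Proof.
move=> Hw Hmin Hmax Hlt; have [Hk Hv0 Hu] := Hw.
set k := size vs in Hk Hlt *.
set w0 := nth 0 vs 0; set wk := nth 0 vs k.-1; set w1 := nth 0 vs 1.
have w0in : w0 \in vs by apply: win; slia.
have wkin : wk \in vs by apply: win; slia.
have w1in : w1 \in vs by apply: win; slia.
have H0k : w0 <> wk by move/(wne Hw) => H; have := H ltac:(slia) ltac:(slia); slia.
have Hck : cid vs k.-1 = mkedge wk w0 by rewrite ck_eq //; slia.
set ck := mkedge wk w0 in Hck *.
set T := (radii v0 vs `\ mkedge v0 w0) `|` [fset ck].
have memT : forall e, e \in T = (e != mkedge v0 w0) && (e \in radii v0 vs) || (e == ck).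
  by move=> e; rewrite /T in_fsetU in_fsetD1 in_fset1.
have ckW : ck \in wheel_edges v0 vs by rewrite /wheel_edges in_fsetU -Hck inC ?orbT //; slia.
have ckR : ck \notin radii v0 vs.
  apply/negP => /memR [z _]; rewrite -Hck => E; apply: (r_ne_c Hw (i := k.-1)); [slia|by rewrite E].
have TW : T `<=` wheel_edges v0 vs.
  apply/fsubsetP => e; rewrite memT => /orP [/andP [_ H]|/eqP ->] //.
  by rewrite /wheel_edges in_fsetU H.
have Tend : forall e, e \in T -> e.1 \in v0 :: vs /\ e.2 \in v0 :: vs.
  by move=> e /(fsubsetP TW) /(W_end Hw) [].
have Cend : forall e, e \in wheel_edges v0 vs `\` T -> e.1 \in v0 :: vs /\ e.2 \in v0 :: vs.
  by move=> e; rewrite in_fsetD => /andP [_ /(W_end Hw) []].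
have Hcoup : coupled_tree v0 vs T.
  split => //.
  - apply: (star_tree (a := w0) (b := wk)) => //.
    + move=> x y; rewrite /adj memT => /orP [/andP [Hne /memR [z Hz E]]|/eqP E].
      * have Hzw : z <> w0 by move=> Ez; move: Hne; rewrite E Ez eqxx.
        case/mkedge_eq: E => [[-> ->]|[-> ->]]; [constructor 1|constructor 2]; by split.
      * case/mkedge_eq: E => [[-> ->]|[-> ->]]; [constructor 4|constructor 3]; by split.
    + move=> z Hz Hzw; rewrite /adj memT mkedgeC inR // andbT; apply/orP; left.
      apply/eqP => /(r_inj Hw Hz); exact: Hzw.
    + by rewrite /adj memT mkedgeC eqxx orbT.
  - apply: path_treeA => //.
    + move=> x y; rewrite /adj in_fsetD memT /wheel_edges in_fsetU negb_or negb_and negbK.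
      case/andP => /andP [H1 H2] /orP [/memR [z Hz E]|/memC [i Hi E]].
      * have Ez : z = w0.
          case/orP: H1 => [/eqP E1|]; first by apply: (r_inj Hw Hz); rewrite -E E1.
          by rewrite E inR.
        rewrite Ez in E; case/mkedge_eq: E => [[-> ->]|[-> ->]]; [constructor 1|constructor 2]; by split.
      * have Hi' : i.+1 < k.
          case: (ltnP i.+1 k) => // Hik; have Ei : i = k.-1 by slia.
          by move: H2; rewrite E Ei Hck eqxx.
        rewrite cidS // in E; case/mkedge_eq: E => [[-> ->]|[-> ->]];
        [constructor 3|constructor 4]; exists i => //.
    + rewrite /adj (mkedgeC w0 v0) in_fsetD memT eqxx /= /wheel_edges in_fsetU inR // andbT.
      apply/eqP => E; have Hi : k.-1 < size vs by slia. by apply: (r_ne_c Hw (z := w0) Hi); rewrite E Hck.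
    + move=> j Hj; have Hc : mkedge (nth 0 vs j) (nth 0 vs j.-1) = cid vs j.-1.
        by rewrite mkedgeC cidS prednK //; slia.
      rewrite /adj Hc in_fsetD memT /wheel_edges in_fsetU inC ?orbT; last slia.
      rewrite andbT negb_or; apply/andP; split.
      * apply/negP => /andP [_ /memR [z _ E]]; apply: (r_ne_c Hw (z := z) (i := j.-1)); [slia|by rewrite E].
      * rewrite -Hck; apply/eqP => /(cid_inj Hw) H; have := H ltac:(slia) ltac:(slia); slia.
split => // T' HT' Hne.
have HcT' := coupled_card Hw HT'.
have HcT : k <= #|`T|.
  have := cardR Hw; have := cardfsD1 (mkedge v0 w0) (radii v0 vs).
  rewrite inR // /T fsetUC cardfsU1 in_fsetD1 (negbTE ckR) andbF /=.
  rewrite /nat_of_bool; slia.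
apply: set_succ_crit; [slia|exact: Hne|].
move=> m HmT' HmT Hag.
case: HT' => [HT'W [_ HT'c HT'a] [_ HCc _]].
have HmW := fsubsetP HT'W m HmT'.
move: (HmW); rewrite /wheel_edges in_fsetU => /orP [/memR [z Hz Em]|/memC [i Hi Em]].
- (* m is a radius: then it is r w0, and all radii are in T' *)
  have Ez : z = w0.
    apply/eqP; apply/negPn/negP => Hzw; move: HmT; rewrite memT Em inR // andbT.
    case: eqP => // /(r_inj Hw Hz) E; by rewrite E eqxx in Hzw.
  have allR : forall y, y \in vs -> mkedge v0 y \in T'.
    move=> y Hy; case: (eqVneq y w0) => [->|Hyw]; first by rewrite -Ez -Em.
    rewrite -Hag; first by rewrite memT inR // andbT; apply/orP; left; apply/eqP => /(r_inj Hw Hy); apply/eqP.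
    rewrite Em Ez (mk_ord (Hmin _ Hy)) (mk_ord (Hmin _ w0in)) /edge_succ /=.
    have := Hmax _ Hy; move/eqP: Hyw; slia.
  have [y Hy] := conn_nbr HCc (x := v0) (z := w0) ltac:(by rewrite inE eqxx) ltac:(by rewrite inE w0in orbT)
                  ltac:(by move=> E; move: Hv0; rewrite E w0in).
  move: Hy; rewrite /adj in_fsetD => /andP [Hn HW].
  by rewrite allR in Hn; last exact: W_v0 Hw HW.
-
  have [Ha Hb Hab] := cid_ends Hw Hi.
  move: Em; rewrite /cid; set a := nth 0 vs i; set b := nth 0 vs _ => Em.
  have agR : forall y, y \in vs -> (mkedge v0 y \in T) = (mkedge v0 y \in T').
    move=> y Hy; apply: Hag; rewrite Em (mk_ord (Hmin _ Hy)) /edge_succ /mkedge /=.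
    have := Hmin _ Ha; have := Hmin _ Hb; slia.
  have inT'R : forall y, y \in vs -> y <> w0 -> mkedge v0 y \in T'.
    move=> y Hy Hyw; rewrite -agR // memT inR // andbT; apply/orP; left.
    by apply/eqP => /(r_inj Hw Hy).
  case: (eqVneq a w0) => [Eaw|Haw]; last case: (eqVneq b w0) => [Ebw|Hbw].
  +
    have Ei : i = 0 by apply: (wne Hw Hi) => //; slia.
    have Eb : b = w1 by rewrite /b Ei modn_small //; slia.
    have Hw1 : w1 <> w0 by move/(wne Hw) => H; have := H ltac:(slia) ltac:(slia).
    have ckT' : ck \in T'.
      rewrite -Hag; first by rewrite memT eqxx orbT.
      rewrite Em Eaw Eb /ck /mkedge /edge_succ /=.
      have := Hmax _ wkin; have := Hmax _ w1in; slia.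
    have Hsub : T `<=` T' `\ m.
      apply/fsubsetP => e; rewrite memT in_fsetD1 => /orP [/andP [He1 He2]|/eqP ->].
      * have [y Hy Ey] := memR He2; rewrite Ey inT'R // ?andbT.
        -- by apply/eqP => E; move: HmT; rewrite -E memT -Ey He1 He2.
        -- by move=> E; move: He1; rewrite Ey E eqxx.
      * by rewrite ckT' andbT; apply/eqP => E; move: HmT; rewrite -E memT eqxx orbT.
    have := fsubset_leq_card Hsub; have := cardfsD1 m T'; rewrite HmT' /nat_of_bool; slia.
  +
    have Ei : i = k.-1.
      move: Ebw; rewrite /b modS; [case: eqP => [E _|E]; [slia|] |slia|slia].
      move/(wne Hw) => H; have := H ltac:(slia) ltac:(slia); slia.
    have Em' : m = ck by rewrite -Hck /cid Em /a /b Ei.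
    by move: HmT; rewrite memT Em' eqxx orbT.
  + (* triangle *)
    apply: HT'a; exists [:: v0; a; b]; split => //.
    * rewrite /= !inE negb_or; apply/and3P; split; [apply/andP; split| |by []].
      -- by apply/eqP => E; move: Hv0; rewrite E Ha.
      -- by apply/eqP => E; move: Hv0; rewrite E Hb.
      -- by apply/eqP.
    * rewrite /= /adj inT'R //; last exact/eqP.
      rewrite -Em HmT' mkedgeC inT'R //; exact/eqP.
Qed.

Lemma part2 v0 vs : wh v0 vs ->
  (forall v, v \in vs -> v < v0) ->
  (forall e, e \in chords vs -> e != mkedge (nth 0 vs 0) (nth 0 vs 1) ->
      edge_succ e (mkedge (nth 0 vs 0) (nth 0 vs 1))) ->
  nth 0 vs 1 < nth 0 vs 0 ->
  leading_tree v0 vs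
     ((chords vs `\ mkedge (nth 0 vs 0) (nth 0 vs 1))
        `|` [fset mkedge v0 (nth 0 vs 1)]).
Proof.
move=> Hw Hmax Hsm Hlt; have [Hk Hv0 Hu] := Hw.
set w0 := nth 0 vs 0; set w1 := nth 0 vs 1; set wk := nth 0 vs (size vs).-1.
have w0in : w0 \in vs by apply: win; slia.
have wkin : wk \in vs by apply: win; slia.
have w1in : w1 \in vs by apply: win; slia.
have Hc12 : cid vs 0 = mkedge w0 w1 by rewrite c12_eq //; slia.
set c12 := mkedge w0 w1 in Hc12 Hsm *.
set T := (chords vs `\ c12) `|` [fset mkedge v0 w1].
have memT : forall e, e \in T = (e != c12) && (e \in chords vs) || (e == mkedge v0 w1).
  by move=> e; rewrite /T in_fsetU in_fsetD1 in_fset1.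
have r1C : mkedge v0 w1 \notin chords vs.
  apply/negP => /memC [i Hi E]; exact: (r_ne_c Hw Hi E).
have TW : T `<=` wheel_edges v0 vs.
  apply/fsubsetP => e; rewrite memT => /orP [/andP [_ H]|/eqP ->];
  by rewrite /wheel_edges in_fsetU ?H ?inR ?orbT.
have Tend : forall e, e \in T -> e.1 \in v0 :: vs /\ e.2 \in v0 :: vs.
  by move=> e /(fsubsetP TW) /(W_end Hw) [].
have Cend : forall e, e \in wheel_edges v0 vs `\` T -> e.1 \in v0 :: vs /\ e.2 \in v0 :: vs.
  by move=> e; rewrite in_fsetD => /andP [_ /(W_end Hw) []].
have Hcoup : coupled_tree v0 vs T.
  split => //.
  - apply: path_treeB => //.
    + move=> x y; rewrite /adj memT => /orP [/andP [Hne /memC [i Hi E]]|/eqP E].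
      * have Hi0 : i <> 0 by move=> Ei; move: Hne; rewrite E Ei Hc12 eqxx.
        case: (ltnP i.+1 (size vs)) => Hik.
        -- rewrite cidS // in E; case/mkedge_eq: E => [[-> ->]|[-> ->]].
           ++ right; right; left; exists i; split => //; slia.
           ++ right; right; right; left; exists i; split => //; slia.
        -- have Ei : i = (size vs).-1 by slia.
           rewrite Ei ck_eq in E; last by slia.
           case/mkedge_eq: E => [[-> ->]|[-> ->]].
           ++ by right; right; right; right; left.
           ++ by right; right; right; right; right.
      * case/mkedge_eq: E => [[-> ->]|[-> ->]]; [left|right; left]; by split.
    + by rewrite /adj memT mkedgeC eqxx orbT.
    + rewrite /adj memT mkedgeC -ck_eq; last by slia.
      rewrite inC; last by slia.
      rewrite andbT; apply/orP; left; rewrite -Hc12; apply/eqP => /(cid_inj Hw) H.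
      have := H ltac:(slia) ltac:(slia); slia.
    + move=> j Hj; have Hc : mkedge (nth 0 vs j) (nth 0 vs j.-1) = cid vs j.-1.
        by rewrite mkedgeC cidS prednK //; slia.
      rewrite /adj Hc memT inC; last by slia.
      rewrite andbT; apply/orP; left; rewrite -Hc12; apply/eqP => /(cid_inj Hw) H.
      have := H ltac:(slia) ltac:(slia); slia.
  - have Hw10 : w1 <> w0 by move/(wne Hw) => H; have := H ltac:(slia) ltac:(slia).
    apply: (star_tree (a := w1) (b := w0)) => //.
    + move=> x y; rewrite /adj in_fsetD memT /wheel_edges in_fsetU negb_or negb_and negbK.
      case/andP => /andP [H1 H2] /orP [/memR [z Hz E]|/memC [i Hi E]].
      * have Hzw : z <> w1 by move=> Ez; move: H2; rewrite E Ez eqxx.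
        case/mkedge_eq: E => [[-> ->]|[-> ->]]; [constructor 1|constructor 2]; by split.
      * have E' : mkedge x y = c12.
          case/orP: H1 => [/eqP -> //|]; by rewrite E inC.
        case/mkedge_eq: E' => [[-> ->]|[-> ->]]; [constructor 4|constructor 3]; by split.
    + move=> z Hz Hzw; rewrite /adj in_fsetD memT mkedgeC /wheel_edges in_fsetU inR // andbT.
      rewrite negb_or; apply/andP; split.
      * apply/negP => /andP [_ /memC [i Hi E]]; exact: (r_ne_c Hw Hi E).
      * by apply/eqP => /(r_inj Hw Hz).
    + rewrite /adj in_fsetD memT mkedgeC eqxx /= /wheel_edges in_fsetU -/c12 -Hc12 inC ?orbT; last by slia.
      rewrite andbT Hc12; apply/eqP => E; have Hi : 0 < size vs by slia.
      by apply: (r_ne_c Hw (z := w1) Hi); rewrite Hc12 -E.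
split => // T' HT' Hne.
have HcT' := coupled_card Hw HT'.
have HcT : size vs <= #|`T|.
  have := cardCh Hw; have := cardfsD1 c12 (chords vs).
  rewrite -Hc12 inC; last by slia.
  rewrite Hc12 /T fsetUC cardfsU1 in_fsetD1 (negbTE r1C) andbF /= /nat_of_bool; slia.
apply: set_succ_crit; [slia|exact: Hne|].
move=> m HmT' HmT Hag.
case: HT' => [HT'W [_ HT'c HT'a] [_ HCc _]].
have HmW := fsubsetP HT'W m HmT'.
have card_contra : T `<=` T' `\ m -> False.
  move=> Hsub; have := fsubset_leq_card Hsub; have := cardfsD1 m T'; rewrite HmT' /nat_of_bool; slia.
have c1ord : c12 = (w1, w0) by rewrite /c12 mkedgeC mk_ord.
have chord_lt : forall h, h \in chords vs -> h.1 <= w1.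
  move=> h Hh; case: (eqVneq h c12) => [->|Hh']; first by rewrite c1ord.
  have := Hsm h Hh Hh'; rewrite c1ord /edge_succ /=; slia.
move: (HmW); rewrite /wheel_edges in_fsetU => /orP [/memR [y Hy Em]|/memC [i Hi Em]].
- have Hyw1 : y <> w1 by move=> E; move: HmT; rewrite memT Em E eqxx orbT.
  have Hy0 := v0ne Hw Hy.
  case: (eqVneq y w0) => [Eyw|Hyw0].
  +
    apply: card_contra; apply/fsubsetP => e; rewrite memT in_fsetD1 => /orP [/andP [He1 He2]|/eqP ->].
    * apply/andP; split.
      -- by apply/eqP => E; move: HmT; rewrite -E memT He1 He2.
      -- rewrite -Hag; first by rewrite memT He1 He2.
         rewrite Em Eyw (mkedgeC v0 w0) (mk_ord (Hmax _ w0in)) /edge_succ /=.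
         move: (chord_lt e He2); case: (e) => a b /=; slia.
    * apply/andP; split.
      -- by rewrite Em Eyw; apply/eqP => /(r_inj Hw w1in) E; move: Hlt; slia.
      -- rewrite -Hag; first by rewrite memT eqxx orbT.
         rewrite Em Eyw (mkedgeC v0 w0) (mkedgeC v0 w1) (mk_ord (Hmax _ w0in)) (mk_ord (Hmax _ w1in)) /edge_succ /=; slia.
  + (* y has no neighbour in the complement *)
    have [y' Hy'] := conn_nbr HCc (x := y) (z := v0) ltac:(by rewrite inE Hy orbT)
                  ltac:(by rewrite inE eqxx) Hy0.
    move: Hy'; rewrite /adj in_fsetD => /andP [Hn HW].
    case: (W_y Hw Hy HW) => [E|HC].
    * by move: Hn; rewrite E mkedgeC -Em HmT'.
    * have [i Hi Ei] := memC HC; have [Ha Hb Hab] := cid_ends Hw Hi.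
      have Hy'in : y' \in vs /\ y' <> y.
        move: Ei; rewrite /cid; case/mkedge_eq => [[E1 E2]|[E1 E2]]; rewrite E2 E1; split => // E;
        apply: Hab; by rewrite E.
      case: Hy'in => Hy'in Hyy.
      have : (mkedge y y' \in T) = (mkedge y y' \in T').
        apply: Hag; rewrite Em (mkedgeC v0 y) (mk_ord (Hmax _ Hy)) /edge_succ /mkedge /=.
        have := Hmax _ Hy'in; slia.
      rewrite (negbTE Hn) memT HC andbT; case: eqP => //= /mkedge_eq [[E1 _]|[E1 _]].
      -- by move/eqP: Hyw0.
      -- by move=> *; apply: Hyw1.
- (* m is a chord: it must be c12, then all chords are in T' *)
  have Emc : m = c12.
    apply/eqP; apply/negPn/negP => Hne'; move: HmT; rewrite memT Hne' Em inC //.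
  have allC : forall h, h \in chords vs -> h \in T'.
    move=> h Hh; case: (eqVneq h c12) => [->|Hh']; first by rewrite -Emc.
    rewrite -Hag; first by rewrite memT Hh' Hh.
    rewrite Emc; exact: Hsm.
  have [y Hy] := conn_nbr HT'c (x := v0) (z := w0) ltac:(by rewrite inE eqxx) ltac:(by rewrite inE w0in orbT)
                  ltac:(by move=> E; move: Hv0; rewrite E w0in).
  have HyW := fsubsetP HT'W _ Hy.
  have Hyv := W_v0 Hw HyW.
  have rC : mkedge v0 y \notin chords vs.
    apply/negP => /memC [i' Hi' E]; exact: (r_ne_c Hw Hi' E).
  have Hsub : mkedge v0 y |` chords vs `<=` T'.
    apply/fsubsetP => e; rewrite in_fset1U => /orP [/eqP ->|]; [exact: Hy|exact: allC].
  have := fsubset_leq_card Hsub; rewrite cardfsU1 rC /nat_of_bool; have := cardCh Hw; slia.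
Qed.


Theorem proposition4p2 (n : nat) (v0 : nat) (vs : seq nat) :
  is_wheel n v0 vs ->
  (* (i) center is the minimum vertex, v1 = max spoke, v2 > vk *)
  ((forall v, v \in vs -> v0 < v) ->
   (forall v, v \in vs -> v <= nth 0 vs 0) ->
   nth 0 vs (size vs).-1 < nth 0 vs 1 ->
   leading_tree v0 vs
     ((radii v0 vs `\ mkedge v0 (nth 0 vs 0))
        `|` [fset mkedge (nth 0 vs (size vs).-1) (nth 0 vs 0)])) /\
  (* (ii) center is the maximum vertex, v1v2 the ≻-smallest chord, v1 > v2 *)
  ((forall v, v \in vs -> v < v0) ->
   (forall e, e \in chords vs -> e != mkedge (nth 0 vs 0) (nth 0 vs 1) ->
      edge_succ e (mkedge (nth 0 vs 0) (nth 0 vs 1))) ->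
   nth 0 vs 1 < nth 0 vs 0 ->
   leading_tree v0 vs
     ((chords vs `\ mkedge (nth 0 vs 0) (nth 0 vs 1))
        `|` [fset mkedge v0 (nth 0 vs 1)])).
Proof.
case=> Hk /andP [Hv0 Hu] _.
have Hw : wh v0 vs by split.
split; [exact: part1|exact: part2].
Qed.
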